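(* Let $G$ be a finite group. If $o(G)<o(S_3)=\frac{13}{6}$, then $G$ is an elementary abelian $2$-group. Moreover, if $o(G)=\frac{13}{6}$, then $G\cong S_3$.
   Context: For a finite group $G$, $|x|$ denotes the order of an element $x$, $\psi(G)=\sum_{x\in G}|x|$, and $o(G)=\psi(G)/|G|$ (the average element order). $S_3$ is the symmetric group of degree $3$. *)

(* Defs.v *)
From mathcomp Require Import all_boot all_order all_algebra all_fingroup all_solvable.
Set Implicit Arguments. Unset Strict Implicit. Unset Printing Implicit Defensive.
Import GRing.Theory Num.Theory.

Definition psi (gT : finGroupType) (G : {set gT}) : nat :=
  (\sum_(x in G) #[x]%g)%N.

Definition avg_order (gT : finGroupType) (G : {set gT}) : rat :=
  ((psi G)%:R / (#|G|)%:R)%R.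

(* Main.v *)
Require Import Defs.
From mathcomp Require Import all_boot all_order all_algebra all_fingroup all_solvable.
From mathcomp Require Import zify.
Set Implicit Arguments. Unset Strict Implicit. Unset Printing Implicit Defensive.

Open Scope group_scope.

Lemma sum_card (T : finType) (A : {pred T}) (P : pred T) :
  (\sum_(x in A) (P x : nat) = #|[set x in A | P x]|)%N.
Proof.
rewrite -sum1_card big_mkcond [RHS]big_mkcond /=; apply: eq_bigr => x _.
by rewrite !inE; case: (x \in A); case: (P x).
Qed.

Lemma even_inv (gT : finGroupType) (k : nat) (A : {set gT}) :
  (#|A| <= k)%N -> {in A, forall x, x^-1 \in A /\ x^-1 != x} -> ~~ odd #|A|.
Proof.
elim: k A => [|k IH] A Hk HA.
  by move: Hk; rewrite leqn0 => /eqP ->.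
case: (boolP (A == set0)) => [/eqP ->|/set0Pn [x xA]]; first by rewrite cards0.
have [xiA nx] := HA x xA.
set B := A :\: [set x; x^-1].
have sub : [set x; x^-1] \subset A by rewrite subUset !sub1set xA xiA.
have cB : #|A| = (#|B| + 2)%N.
  rewrite /B cardsD (setIidPr sub) cards2 eq_sym nx.
  have := subset_leq_card sub; rewrite cards2 eq_sym nx; lia.
have HB : {in B, forall y, y^-1 \in B /\ y^-1 != y}.
  move=> y; rewrite /B !inE negb_or => /andP[/andP[ny1 ny2] yA].
  have [yiA nyi] := HA y yA; split=> //.
  rewrite yiA andbT negb_or; apply/andP; split.
    by apply: contra ny2 => /eqP <-; rewrite invgK.
  by apply: contra ny1 => /eqP /invg_inj ->.
have := IH B; rewrite cB; move=> H.
have H2 : (#|B| <= k)%N by lia.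
have := H H2 HB; rewrite addn2 /=; by rewrite negbK => ->.
Qed.

Definition Mset (gT : finGroupType) (G : {set gT}) := [set x in G | 2 < #[x]]%N.
Definition Kset (gT : finGroupType) (G : {set gT}) := [set x in G | 3 < #[x]]%N.

Lemma ord_cases (gT : finGroupType) (x : gT) : x != 1 -> (1 < #[x])%N.
Proof. by rewrite order_gt1. Qed.

Lemma psi_lower (gT : finGroupType) (G : {group gT}) :
  (2 * #|G| + #|Mset G| + #|Kset G| <= (psi G).+1)%N.
Proof.
have H1 : (\sum_(x in G) (2 + (2 < #[x]) + (3 < #[x])) <=
          \sum_(x in G) (#[x] + (x == 1%g)))%N.
  apply: leq_sum => x _; case: (eqVneq x 1) => [->|ne]; first by rewrite order1 ?eqxx.
  have := ord_cases ne; case: #[x] => [|[|[|[|k]]]] //=; lia.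
move: H1; rewrite !big_split /= !sum_card sum_nat_const /psi.
have -> : [set x in G | x == 1] = [set 1].
  by apply/setP => x; rewrite !inE; case: (eqVneq x 1) => [->|_]; rewrite ?andbF ?group1.
rewrite cards1 /Mset /Kset mulnC addn1; exact.
Qed.

Lemma psi_exact (gT : finGroupType) (G : {group gT}) :
  {in G, forall x, #[x] <= 4}%N ->
  ((psi G).+1 = 2 * #|G| + #|Mset G| + #|Kset G|)%N.
Proof.
move=> H4.
have H1 : (\sum_(x in G) (2 + (2 < #[x]) + (3 < #[x])) =
          \sum_(x in G) (#[x] + (x == 1%g)))%N.
  apply: eq_bigr => x xG; case: (eqVneq x 1) => [->|ne]; first by rewrite order1 ?eqxx.
  have := ord_cases ne; have := H4 x xG; case: #[x] => [|[|[|[|[|k]]]]] //=.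
move: H1; rewrite !big_split /= !sum_card sum_nat_const /psi.
have -> : [set x in G | x == 1] = [set 1].
  by apply/setP => x; rewrite !inE; case: (eqVneq x 1) => [->|_]; rewrite ?andbF ?group1.
rewrite cards1 /Mset /Kset mulnC addn1 => ->; exact: erefl.
Qed.

Lemma psi_upper (gT : finGroupType) (G : {group gT}) :
  #|Mset G| = 0%N -> (psi G <= 2 * #|G|)%N.
Proof.
move/eqP; rewrite cards_eq0 => /eqP HM.
rewrite /psi mulnC -sum_nat_const; apply: leq_sum => x xG.
have : x \notin Mset G by rewrite HM inE.
by rewrite inE xG /= -leqNgt.
Qed.

Lemma ord2_sq (gT : finGroupType) (x : gT) : (#[x] <= 2)%N -> x * x = 1.
Proof.
move=> h; have e : x ^+ 2 = x * x by rewrite expgS expg1.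
apply/eqP; rewrite -e -order_dvdn.
have := order_gt0 x; case: #[x] h => [|[|[|]]] //.
Qed.

Lemma sq_ord2 (gT : finGroupType) (x : gT) : x * x = 1 -> (#[x] <= 2)%N.
Proof.
move=> h; have : #[x] %| 2 by rewrite order_dvdn expgS expg1 h.
by move/dvdn_leq; apply.
Qed.

Lemma M_even (gT : finGroupType) (G : {group gT}) : ~~ odd #|Mset G|.
Proof.
apply: (@even_inv _ #|Mset G|) => // x; rewrite !inE => /andP[xG ox].
rewrite groupV xG orderV ox; split=> //; apply/negP => /eqP e.
have : x * x = 1 by rewrite -{1}e mulVg.
by move/sq_ord2; rewrite leqNgt ox.
Qed.

Lemma commute_sq (gT : finGroupType) (x y : gT) :
  x * x = 1 -> y * y = 1 -> (x * y) * (x * y) = 1 -> commute x y.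
Proof.
have inv : forall z : gT, z * z = 1 -> z^-1 = z.
  by move=> z hz; rewrite -[LHS]mulg1 -hz mulKg.
move=> hx hy hxy; rewrite /commute -[LHS]inv // invMg (inv x) // (inv y) //.
Qed.

Lemma big_sub (gT : finGroupType) (H G : {group gT}) :
  H \subset G -> (#|G| < 2 * #|H|)%N -> H :=: G.
Proof.
move=> sHG lt.
suff hi : #|G : H| = 1%N by rewrite (index1g sHG hi).
have L := Lagrange sHG; have i0 := indexg_gt0 G H; have h0 := cardG_gt0 H.
have : (#|G : H| < 2)%N.
  by rewrite -(ltn_pmul2l h0) L mulnC.
lia.
Qed.

Lemma sMG (gT : finGroupType) (G : {group gT}) : Mset G \subset G.
Proof. by apply/subsetP => x; rewrite inE => /andP[]. Qed.

Lemma notM (gT : finGroupType) (G : {group gT}) x :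
  x \in G :\: Mset G -> x \in G /\ x * x = 1.
Proof.
rewrite !inE => /andP[xM xG]; split=> //; apply: ord2_sq.
by move: xM; rewrite xG /= -leqNgt.
Qed.

Lemma half_card (gT : finGroupType) (G : {group gT}) g : g \in G ->
  (#|G| <= #|[set y in G :\: Mset G | (g * y)%g \in G :\: Mset G]| + 2 * #|Mset G|)%N.
Proof.
move=> gG.
have cI : #|G :\: Mset G| = (#|G| - #|Mset G|)%N by rewrite cardsD (setIidPr (sMG G)).
have cMG := subset_leq_card (sMG G).
have sIDE : G :\: Mset G \subset
    [set y in G :\: Mset G | (g * y)%g \in G :\: Mset G] :|: [set y in G | (g * y)%g \in Mset G].
  apply/subsetP => y yI.
  have yG : y \in G by move: yI; rewrite inE => /andP[].
  have gyG : (g * y)%g \in G by rewrite groupM.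
  rewrite in_setU; case: (boolP ((g * y)%g \in Mset G)) => h.
    by apply/orP; right; rewrite inE yG h.
  by apply/orP; left; rewrite inE yI /= inE h gyG.
have cE : (#|[set y in G | (g * y)%g \in Mset G]| <= #|Mset G|)%N.
  apply: leq_trans (leq_imset_card (mulg g^-1) (Mset G)).
  apply: subset_leq_card; apply/subsetP => y; rewrite inE => /andP[_ h].
  by apply/imsetP; exists (g * y) => //; rewrite mulKg.
have := subset_leq_card sIDE.
have [h1 _] := leq_card_setU [set y in G :\: Mset G | (g * y)%g \in G :\: Mset G]
   [set y in G | (g * y)%g \in Mset G].
lia.
Qed.

Lemma miller (gT : finGroupType) (G : {group gT}) :
  (0 < #|Mset G|)%N -> (#|G| <= 4 * #|Mset G|)%N.
Proof.
move=> m0; rewrite leqNgt; apply/negP => lt.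
have cent : forall x, x \in G :\: Mset G -> forall h, h \in G -> commute x h.
  move=> x xI h hG; have [xG xx] := notM xI.
  have CG : 'C_G[x] :=: G.
    apply: big_sub; first exact: subsetIl.
    have := half_card xG.
    have sDC : [set y in G :\: Mset G | (x * y)%g \in G :\: Mset G] \subset 'C_G[x].
      apply/subsetP => y; rewrite inE => /andP[yI xyI].
      have [yG yy] := notM yI; have [_ xyxy] := notM xyI.
      rewrite inE yG /=; apply/cent1P; symmetry; exact: commute_sq.
    have := subset_leq_card sDC.
    have e : #|'C_G[x]%G| = #|'C_G[x]| := erefl; lia.
  have : h \in 'C_G[x] by rewrite CG.
  by rewrite inE => /andP[_ /cent1P c]; symmetry.
have M0 : Mset G = set0.
  apply/setP => g; rewrite inE [RHS]inE; apply/negP => /andP[gG gM].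
  have := half_card gG.
  have := card_gt0 [set y in G :\: Mset G | (g * y)%g \in G :\: Mset G].
  case: (set0Pn [set y in G :\: Mset G | (g * y)%g \in G :\: Mset G]).
    case=> y; rewrite inE => /andP[yI gyI] _ _.
    have [yG yy] := notM yI; have [_ hgy] := notM gyI.
    have c := cent y yI g gG.
    have gg : g * g = 1.
      rewrite -[g * g]mulg1 -{1}yy !mulgA -(mulgA g g y) -c mulgA -mulgA; exact: hgy.
    by move: gM; rewrite ltnNge (sq_ord2 gg).
  move=> _ /negbT; rewrite -leqNgt leqn0 => /eqP ->; lia.
by move: m0; rewrite M0 cards0.
Qed.

Lemma abelem_of_M0 (gT : finGroupType) (G : {group gT}) :
  #|Mset G| = 0%N -> 2.-abelem G.
Proof.
move/eqP; rewrite cards_eq0 => /eqP M0.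
apply: exponent2_abelem; apply/exponentP => x xG.
have xI : x \in G :\: Mset G by rewrite inE M0 inE xG.
by have [_ xx] := notM xI; rewrite expgS expg1.
Qed.

Lemma main_ineq (gT : finGroupType) (G : {group gT}) :
  (0 < #|Mset G|)%N ->
  (13 * #|G| <= 6 * psi G)%N /\
  ((13 * #|G| = 6 * psi G)%N -> #|G| = 6%N /\ #|Mset G| = 2%N /\ #|Kset G| = 0%N).
Proof.
move=> m0.
have hn := miller m0; have hl := psi_lower G; have he := M_even G.
have [a ha] : exists a, #|Mset G| = (2 * a)%N.
  exists (#|Mset G|./2); rewrite mul2n -[LHS]odd_double_half (negbTE he) //.
have n0 := cardG_gt0 G.
have kM : (#|Kset G| <= #|Mset G|)%N.
  apply: subset_leq_card; apply/subsetP => x; rewrite !inE => /andP[-> h] /=.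
  exact: ltnW.
case: (boolP ((#|Mset G| == 2) && (#|Kset G| == 0))) => [/andP[/eqP m2 /eqP k0] | hc].
  have h3 : 3 %| #|G|.
    have : Mset G != set0 by rewrite -card_gt0.
    case/set0Pn => x xM.
    have xK : x \notin Kset G by apply/negP => h; move: k0; rewrite (cardD1 x) h.
    move: xM xK; rewrite !inE => /andP[xG h2]; rewrite xG /= -leqNgt => h3.
    have -> : 3 = #[x] by apply/eqP; rewrite eqn_leq h2 h3.
    exact: order_dvdG.
  have [c hc] := dvdnP h3.
  split; [lia | move=> e; lia].
move: hc; rewrite negb_and => /orP[/eqP h|/eqP h]; split; try lia; move=> e; lia.
Qed.

Lemma dihedral6 (gT : finGroupType) (G : {group gT}) (a b : gT) :
  #|G| = 6%N -> a \in G -> b \in G -> #[a] = 2%N -> #[b] = 2%N -> a != b ->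
  G \isog [set: 'D_6].
Proof.
move=> oG aG bG oa ob nab.
have iso := involutions_gen_dihedral oa ob nab.
have sHG : <<[set a; b]>> \subset G by rewrite gen_subG subUset !sub1set aG bG.
have dv := cardSg sHG; rewrite oG in dv.
have aH : a \in <<[set a; b]>> by rewrite mem_gen // set21.
have bH : b \in <<[set a; b]>> by rewrite mem_gen // set22.
have ev := order_dvdG aH; rewrite oa in ev.
have a1 : a != 1 by rewrite -order_eq1 oa.
have b1 : b != 1 by rewrite -order_eq1 ob.
have c3 : (3 <= #|<<[set a; b]>>|)%N.
  have s3 : 1 |: [set a; b] \subset <<[set a; b]>>.
    by rewrite subUset sub1set group1 subUset !sub1set aH bH.
  have := subset_leq_card s3; rewrite cardsU1 cards2 nab !inE negb_or.
  by rewrite eq_sym a1 eq_sym b1.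
have c6 : #|<<[set a; b]>>| = 6%N.
  have le6 := dvdn_leq (isT : (0 < 6)%N) dv.
  move: dv ev c3 le6; case: #|<<[set a; b]>>| => [|[|[|[|[|[|[|k]]]]]]] //.
have eHG : <<[set a; b]>> = G :> {set gT}.
  by apply/eqP; rewrite eqEcard sHG oG c6.
by move: iso; rewrite c6 eHG.
Qed.

Lemma ord_tperm (T : finType) (x y : T) : x != y -> #[tperm x y] = 2%N.
Proof.
move=> nxy.
have dv : #[tperm x y] %| 2 by rewrite order_dvdn expgS expg1 tperm2.
have n1 : tperm x y != 1.
  apply/eqP => e; have := congr1 (fun s : {perm T} => s x) e.
  by rewrite tpermL perm1 => ey; move: nxy; rewrite ey eqxx.
move: n1; rewrite -order_eq1; have := dvdn_leq (isT : (0 < 2)%N) dv.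
have := order_gt0 (tperm x y); case: #[_] => [|[|[|]]] //.
Qed.

Lemma cardS3 : #|[set: 'S_3]| = 6%N.
Proof.
have h := card_perm [set: 'I_3]; rewrite cardsT card_ord in h.
rewrite cardsT -[6%N]/(3`!) -h.
apply: eq_card => s; rewrite !inE; symmetry; rewrite unfold_in /perm_on.
by apply/subsetP => x _; rewrite inE.
Qed.

Definition i0 : 'I_3 := @Ordinal 3 0 isT.
Definition i1 : 'I_3 := @Ordinal 3 1 isT.
Definition i2 : 'I_3 := @Ordinal 3 2 isT.
Definition t01 : 'S_3 := tperm i0 i1.
Definition t12 : 'S_3 := tperm i1 i2.

Lemma S3_dihedral : [set: 'S_3] \isog [set: 'D_6].
Proof.
apply: (@dihedral6 _ [set: 'S_3]%G t01 t12); rewrite ?inE //.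
- exact: cardS3.
- exact: ord_tperm.
- exact: ord_tperm.
apply/eqP => e; have := congr1 (fun s : 'S_3 => s i0) e.
by rewrite /t01 /t12 tpermL tpermD.
Qed.

Lemma S3_noncomm : t01 * t12 != t12 * t01.
Proof.
apply/eqP => e; have := congr1 (fun s : 'S_3 => s i0) e.
by rewrite !permM /t01 /t12 (@tpermD _ i1 i2 i0) // !tpermL.
Qed.

Lemma S3_nonab : ~~ abelian [set: 'S_3].
Proof.
apply/negP => /subsetP /(_ t01 (in_setT _)) /centP /(_ t12 (in_setT _)) c.
by move: S3_noncomm; rewrite c eqxx.
Qed.

Lemma S3_orders (x : 'S_3) : (#[x] <= 3)%N.
Proof.
have dv := order_dvdG (in_setT x); rewrite cardS3 in dv.
have le6 := dvdn_leq (isT : (0 < 6)%N) dv.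
case: (eqVneq #[x] 6) => [e6|n6].
  have ec : <[x]> = [set: 'S_3] :> {set 'S_3}.
    by apply/eqP; rewrite eqEcard subsetT cardS3 -orderE e6.
  by move: S3_nonab; rewrite -ec cycle_abelian.
move: dv le6 n6; case: #[x] => [|[|[|[|[|[|[|k]]]]]]] //.
Qed.

Lemma S3_M_le2 : (#|Mset [set: 'S_3]| <= 2)%N.
Proof.
have sA : Mset [set: 'S_3] \subset ('Alt_('I_3)) :\ 1.
  apply/subsetP => x; rewrite inE => /andP[_ h2].
  have o3 : #[x] = 3%N by apply/eqP; rewrite eqn_leq S3_orders h2.
  have x1 : x != 1 by rewrite -order_eq1 o3.
  rewrite in_setD1 x1 Alt_even /=.
  have e := expg_order x; rewrite o3 in e.
  have : odd_perm (x ^+ 3) = odd_perm x.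
    by rewrite (expgS x 2) (expgS x 1) expg1 !odd_permM addbb addbF.
  by rewrite e odd_perm1 => <-.
have h13 : (1 < #|'I_3|)%N by rewrite card_ord.
have cA : (2 * #|'Alt_('I_3)|)%N = #|'I_3|`! := card_Alt h13.
rewrite card_ord in cA.
have a3 : #|'Alt_('I_3)| = 3%N by move: cA; have -> : 3`! = 6%N by []; lia.
apply: leq_trans (subset_leq_card sA) _.
have := cardsD1 1 ('Alt_('I_3)); rewrite group1 a3 /=.
by move=> h; rewrite -(leq_add2l 1) -h.
Qed.

Lemma psiS3 : psi [set: 'S_3] = 13%N.
Proof.
have e := psi_exact (G := [set: 'S_3]%G) (fun x _ => leq_trans (S3_orders x) (isT : (3 <= 4)%N)).
have k0 : #|Kset [set: 'S_3]| = 0%N.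
  apply/eqP; rewrite cards_eq0; apply/eqP/setP => x; rewrite !inE ltnNge.
  by rewrite S3_orders.
have m0 : #|Mset [set: 'S_3]| != 0%N.
  apply/eqP => /(@abelem_of_M0 _ [set: 'S_3]%G) /abelem_abelian.
  by move/negP: S3_nonab.
have he := M_even [set: 'S_3]%G.
have le2 := S3_M_le2.
have m2 : #|Mset [set: 'S_3]| = 2%N.
  move: m0 he le2; case: #|Mset _| => [|[|[|]]] //.
move: e; rewrite k0 m2 cardS3 /=.
move=> h; apply: succn_inj; exact: h.
Qed.

Import GRing.Theory Num.Theory.

Lemma rat_lt (a b c d : nat) : (0 < b)%N -> (0 < d)%N ->
  ((a%:R / b%:R : rat) < c%:R / d%:R)%R = (a * d < c * b)%N.
Proof.
move=> b0 d0.
by rewrite ltr_pdivrMr ?ltr0n // mulrAC ltr_pdivlMr ?ltr0n // -!natrM ltr_nat.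
Qed.

Lemma rat_eq (a b c d : nat) : (0 < b)%N -> (0 < d)%N ->
  ((a%:R / b%:R : rat) = c%:R / d%:R)%R -> (a * d = c * b)%N.
Proof.
move=> b0 d0 /eqP; rewrite eqr_div ?pnatr_eq0 -?lt0n // -!natrM eqr_nat.
by move/eqP.
Qed.

Lemma avgS3 : avg_order [set: 'S_3] = (13%:R / 6%:R)%R.
Proof. by rewrite /avg_order psiS3 cardS3. Qed.

Local Open Scope ring_scope.

Theorem theoremA :
  (forall (gT : finGroupType) (G : {group gT}),
     avg_order G < avg_order [set: 'S_3] -> (2.-abelem G)%g) /\
  avg_order [set: 'S_3] = 13%:R / 6%:R /\
  (forall (gT : finGroupType) (G : {group gT}),
     avg_order G = 13%:R / 6%:R -> (G \isog [set: 'S_3])%g).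
Proof.
split; [|split; [exact: avgS3|]].
  move=> gT G; rewrite avgS3 /avg_order rat_lt ?cardG_gt0 // => h.
  case: (posnP #|Mset G|) => [m0|mpos]; first exact: abelem_of_M0.
  have [h1 _] := main_ineq mpos.
  have h2 : (psi G * 6 < 13 * #|G|)%N := h; lia.
move=> gT G; rewrite /avg_order => /rat_eq h.
have := h (cardG_gt0 G) isT => {}h.
have {}h : (psi G * 6 = 13 * #|G|)%N := h.
case: (posnP #|Mset G|) => [m0|mpos].
  have := psi_upper m0; have := cardG_gt0 G; lia.
have [_ h2] := main_ineq mpos.
have [n6 [m2 k0]] : (#|G| = 6 /\ #|Mset G| = 2 /\ #|Kset G| = 0)%N.
  by apply: h2; lia.
have cJ : (1 < #|(G :\: Mset G) :\ 1%g|)%N.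
  have c1 : #|G :\: Mset G| = 4%N by rewrite cardsD (setIidPr (sMG G)) n6 m2.
  have i1 : 1%g \in G :\: Mset G by rewrite !inE group1 order1.
  have := cardsD1 1%g (G :\: Mset G); rewrite i1 c1 /= => e.
  by rewrite -(ltn_add2l 1) -e.
have oJ : forall x, x \in (G :\: Mset G) :\ 1%g -> x \in G /\ #[x]%g = 2%N.
  move=> x; rewrite in_setD1 => /andP[x1 xI]; have [xG xx] := notM xI.
  split=> //; have := sq_ord2 xx; have := ord_cases x1; lia.
case/card_gt1P: cJ => a [b [aJ bJ nab]].
have [aG oa] := oJ a aJ; have [bG ob] := oJ b bJ.
have iso := dihedral6 n6 aG bG oa ob nab.
apply: (isog_trans iso); rewrite isog_sym; exact: S3_dihedral.
Qed.
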